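(* Let $F$, $X_0$, $B$, $C$ be as in the context. Suppose that for every $X_1\in\mathbb{R}^m$ with $X_1\neq 0$ and $CX_1=0$ there is no $X_2\in\mathbb{R}^m$ with $CX_2=-B(X_1,X_1)$ (i.e. no approximate solution of degree 1, $X_0+tX_1$ with $X_1\ne0$, extends to an approximate solution $X_0+tX_1+t^2X_2$ of degree 2). Then $F(X)=0$ has no nonconstant analytic family of solutions with initial term $X_0$.
   Context: Let $m,n\ge 1$ and let $F=(F_1,\dots,F_n):\mathbb{R}^m\to\mathbb{R}^n$, where each component is a polynomial of degree at most 2 written as $F_k(X)=\sum_{i=1}^m\sum_{j=1}^m\alpha^k_{ij}x_ix_j+\sum_{i=1}^m\beta^k_ix_i+\gamma^k$ for $X=(x_1,\dots,x_m)$, with real coefficients and $\alpha^k_{ij}=\alpha^k_{ji}$. Fix $X_0\in\mathbb{R}^m$ with $F(X_0)=0$. Define the bilinear map $B:\mathbb{R}^m\times\mathbb{R}^m\to\mathbb{R}^n$ by $B(X,Y)_k=\sum_{i,j=1}^m\alpha^k_{ij}x_iy_j$, the linear map $A:\mathbb{R}^m\to\mathbb{R}^n$ by $(AX)_k=\sum_{i=1}^m\beta^k_ix_i$, and the linear map $C:\mathbb{R}^m\to\mathbb{R}^n$ by $CX=B(X_0,X)+B(X,X_0)+AX$. An analytic family of solutions with initial term $X_0$ is a power series $X(t)=\sum_{p=0}^\infty X_pt^p$ with $X_p\in\mathbb{R}^m$, positive radius of convergence, constant term equal to $X_0$, and $F(X(t))=0$ for all sufficiently small $t$; it is nonconstant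 if $X_p\neq 0$ for some $p\ge 1$. *)

(* Defs.v *)
From Stdlib Require Import Reals Lra Lia.
From Coquelicot Require Import Coquelicot.
Open Scope R_scope.

(* Vectors of R^m are represented as functions nat -> R; only the
   components 0 <= i < m are meaningful. *)

Fixpoint sumR (m : nat) (f : nat -> R) : R :=
  match m with
  | O => 0
  | S m' => sumR m' f + f m'
  end.

Definition Fmap (m : nat) (alpha : nat -> nat -> nat -> R) (beta : nat -> nat -> R)
  (gamma : nat -> R) (X : nat -> R) (k : nat) : R :=
  sumR m (fun i => sumR m (fun j => alpha k i j * X i * X j))
  + sumR m (fun i => beta k i * X i) + gamma k.

Definition Bmap (m : nat) (alpha : nat -> nat -> nat -> R) (X Y : nat -> R) (k : nat) : R :=
  sumR m (fun i => sumR m (fun j => alpha k i j * X i * Y j)).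

Definition Amap (m : nat) (beta : nat -> nat -> R) (X : nat -> R) (k : nat) : R :=
  sumR m (fun i => beta k i * X i).

Definition Cmap (m : nat) (alpha : nat -> nat -> nat -> R) (beta : nat -> nat -> R)
  (X0 X : nat -> R) (k : nat) : R :=
  Bmap m alpha X0 X k + Bmap m alpha X X0 k + Amap m beta X k.

(* Xs p i = i-th component of the coefficient X_p.  The family is
   X(t) = sum_p X_p t^p, evaluated componentwise. *)
Definition eval_family (Xs : nat -> nat -> R) (t : R) : nat -> R :=
  fun i => PSeries (fun p => Xs p i) t.

Definition analytic_family (m n : nat) (alpha : nat -> nat -> nat -> R)
  (beta : nat -> nat -> R) (gamma : nat -> R) (X0 : nat -> R)
  (Xs : nat -> nat -> R) : Prop :=
  (forall i, (i < m)%nat -> Rbar_lt 0 (CV_radius (fun p => Xs p i))) /\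
  (forall i, (i < m)%nat -> Xs O i = X0 i) /\
  (exists delta, 0 < delta /\
     forall t, Rabs t < delta ->
       forall k, (k < n)%nat -> Fmap m alpha beta gamma (eval_family Xs t) k = 0).

Definition nonconstant (m : nat) (Xs : nat -> nat -> R) : Prop :=
  exists p i, (1 <= p)%nat /\ (i < m)%nat /\ Xs p i <> 0.

(* Main.v *)
Require Import Defs.
From Stdlib Require Import Reals Lra Lia Classical.
From Coquelicot Require Import Coquelicot.
Open Scope R_scope.

Lemma sumR_ext m f g : (forall i, (i < m)%nat -> f i = g i) -> sumR m f = sumR m g.
Proof. induction m; simpl; intros H; auto. rewrite IHm by (intros; apply H; lia). rewrite H by lia. auto. Qed.

Lemma sumR_plus m f g : sumR m (fun i => f i + g i) = sumR m f + sumR m g.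
Proof. induction m; simpl; [ring|]. rewrite IHm; ring. Qed.

Lemma sumR_scal m c f : sumR m (fun i => c * f i) = c * sumR m f.
Proof. induction m; simpl; [ring|]. rewrite IHm; ring. Qed.

Lemma sumR_swap m n (f : nat -> nat -> R) :
  sumR m (fun i => sumR n (fun j => f i j)) = sumR n (fun j => sumR m (fun i => f i j)).
Proof. induction m; simpl.
  - induction n; simpl; auto. rewrite <- IHn; ring.
  - rewrite IHm, <- sumR_plus. auto. Qed.

Definition Lin m (alpha : nat -> nat -> nat -> R) beta X0 k j :=
  sumR m (fun i => alpha k i j * X0 i) + sumR m (fun i => alpha k j i * X0 i) + beta k j.

Lemma Cmap_lin m alpha beta X0 Y k :
  Cmap m alpha beta X0 Y k = sumR m (fun j => Lin m alpha beta X0 k j * Y j).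
Proof.
  unfold Cmap, Bmap, Amap, Lin.
  rewrite (sumR_swap m m (fun i j => alpha k i j * X0 i * Y j)).
  transitivity (sumR m (fun j => sumR m (fun i => alpha k i j * X0 i) * Y j)
    + sumR m (fun j => sumR m (fun i => alpha k j i * X0 i) * Y j)
    + sumR m (fun j => beta k j * Y j)).
  - assert (E1 : sumR m (fun j => sumR m (fun i => alpha k i j * X0 i * Y j)) = sumR m (fun j => sumR m (fun i => alpha k i j * X0 i) * Y j)).
    { apply sumR_ext; intros j _. rewrite Rmult_comm, <- sumR_scal. apply sumR_ext; intros; ring. }
    assert (E2 : sumR m (fun i => sumR m (fun j => alpha k i j * Y i * X0 j)) = sumR m (fun j => sumR m (fun i => alpha k j i * X0 i) * Y j)).
    { apply sumR_ext; intros j _. rewrite Rmult_comm, <- sumR_scal. apply sumR_ext; intros; ring. }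
    rewrite E1, E2; auto.
  - rewrite <- !sumR_plus. apply sumR_ext; intros; ring.
Qed.

Lemma Fmap_decomp m alpha beta gamma X0 D k :
  Fmap m alpha beta gamma (fun i => X0 i + D i) k =
  Fmap m alpha beta gamma X0 k + Cmap m alpha beta X0 D k + Bmap m alpha D D k.
Proof.
  unfold Fmap, Cmap, Bmap, Amap.
  assert (E : sumR m (fun i => sumR m (fun j => alpha k i j * (X0 i + D i) * (X0 j + D j)))
   = sumR m (fun i => sumR m (fun j => alpha k i j * X0 i * X0 j))
   + sumR m (fun i => sumR m (fun j => alpha k i j * X0 i * D j))
   + sumR m (fun i => sumR m (fun j => alpha k i j * D i * X0 j))
   + sumR m (fun i => sumR m (fun j => alpha k i j * D i * D j))).
  { rewrite <- !sumR_plus. apply sumR_ext; intros. rewrite <- !sumR_plus. apply sumR_ext; intros; ring. }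
  rewrite E.
  assert (E2 : sumR m (fun i => beta k i * (X0 i + D i)) = sumR m (fun i => beta k i * X0 i) + sumR m (fun i => beta k i * D i)).
  { rewrite <- sumR_plus. apply sumR_ext; intros; ring. }
  rewrite E2. ring.
Qed.

Lemma Fmap_ext m alpha beta gamma X X' k : (forall i, (i < m)%nat -> X i = X' i) ->
  Fmap m alpha beta gamma X k = Fmap m alpha beta gamma X' k.
Proof. intros H. unfold Fmap.
  rewrite (sumR_ext m (fun i => sumR m (fun j => alpha k i j * X i * X j)) (fun i => sumR m (fun j => alpha k i j * X' i * X' j))).
  2:{ intros. apply sumR_ext; intros. rewrite !H by auto. auto. }
  rewrite (sumR_ext m (fun i => beta k i * X i) (fun i => beta k i * X' i)); auto.
  intros. rewrite H by auto. auto. Qed.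

Lemma Bmap_ext m alpha X X' k : (forall i, (i < m)%nat -> X i = X' i) ->
  Bmap m alpha X X k = Bmap m alpha X' X' k.
Proof. intros H. unfold Bmap. apply sumR_ext; intros. apply sumR_ext; intros. rewrite !H by auto. auto. Qed.

Lemma Bmap_scal m alpha c Y k : Bmap m alpha (fun i => c * Y i) (fun i => c * Y i) k = c^2 * Bmap m alpha Y Y k.
Proof. unfold Bmap. rewrite <- sumR_scal. apply sumR_ext; intros. rewrite <- sumR_scal. apply sumR_ext; intros. ring. Qed.

Lemma Cmap_scal m alpha beta X0 c Y k : Cmap m alpha beta X0 (fun i => c * Y i) k = c * Cmap m alpha beta X0 Y k.
Proof. rewrite !Cmap_lin, <- sumR_scal. apply sumR_ext; intros; ring. Qed.

Lemma cont_sum m (g : nat -> R -> R) x : (forall i, (i < m)%nat -> continuity_pt (g i) x) ->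
  continuity_pt (fun t => sumR m (fun i => g i t)) x.
Proof. induction m; simpl; intros H.
  - apply continuity_pt_const. intros ? ?; auto.
  - exact (continuity_pt_plus _ _ x (IHm ltac:(intros; apply H; lia)) (H m ltac:(lia))). Qed.

Lemma cont_mult f g x : continuity_pt f x -> continuity_pt g x -> continuity_pt (fun t => f t * g t) x.
Proof. intros; exact (continuity_pt_mult f g x H H0). Qed.

Lemma cont_const c x : continuity_pt (fun _ => c) x.
Proof. apply continuity_pt_const. intros ? ?; auto. Qed.

Lemma cont_pow n x : continuity_pt (fun t => t ^ n) x.
Proof. apply derivable_continuous_pt. apply derivable_pt_pow. Qed.

Lemma Rbar_le_min (r : R) x y : Rbar_le r x -> Rbar_le r y -> Rbar_le r (Rbar_min x y).
Proof. destruct x, y; simpl; intros; auto; try apply Rmin_glb; auto. Qed.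

Lemma rad_sum m (L : nat -> R) (f : nat -> nat -> R) (rho : R) : 0 <= rho ->
  (forall j, (j < m)%nat -> Rbar_le rho (CV_radius (f j))) ->
  Rbar_le rho (CV_radius (fun p => sumR m (fun j => L j * f j p))).
Proof.
  intros Hr. induction m; simpl sumR; intros H.
  - rewrite CV_radius_const_0. simpl; auto.
  - rewrite (CV_radius_ext _ (PS_plus (fun p => sumR m (fun j => L j * f j p)) (PS_scal (L m) (f m)))) by (intros; reflexivity).
    eapply Rbar_le_trans; [|apply CV_radius_plus].
    apply Rbar_le_min. apply IHm; intros; apply H; lia.
    destruct (Req_dec (L m) 0) as [E|E].
    + rewrite (CV_radius_ext _ (fun _ => 0)). rewrite CV_radius_const_0; simpl; auto.
      intros; unfold PS_scal; rewrite E; simpl. change (scal 0 (f m n)) with (0 * f m n). ring.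
    + rewrite CV_radius_scal by auto. apply H; lia.
Qed.

Lemma ps_sum m (L : nat -> R) (f : nat -> nat -> R) t :
  (forall j, (j < m)%nat -> ex_pseries (f j) t) ->
  ex_pseries (fun p => sumR m (fun j => L j * f j p)) t /\
  PSeries (fun p => sumR m (fun j => L j * f j p)) t = sumR m (fun j => L j * PSeries (f j) t).
Proof.
  induction m; simpl sumR; intros H.
  - split. apply CV_radius_inside. rewrite CV_radius_const_0. simpl; auto. apply PSeries_const_0.
  - destruct IHm as [H1 H2]. intros; apply H; lia.
    assert (Hs : ex_pseries (PS_scal (L m) (f m)) t).
    { apply ex_pseries_scal. apply Rmult_comm. apply H; lia. }
    split.
    + eapply ex_pseries_ext; [|apply ex_pseries_plus; [exact H1|exact Hs]]. intros; reflexivity.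
    + rewrite (PSeries_ext _ (PS_plus (fun p => sumR m (fun j => L j * f j p)) (PS_scal (L m) (f m)))) by (intros; reflexivity).
      rewrite PSeries_plus by auto. rewrite H2, PSeries_scal. reflexivity.
Qed.

Lemma cont_eps g x : continuity_pt g x -> forall e, 0 < e -> exists a, 0 < a /\
  forall y, x <> y -> Rabs (y - x) < a -> Rabs (g y - g x) < e.
Proof.
  intros H e He. destruct (H e He) as [a [Ha Hy]]. exists a; split; auto.
  intros y Hxy Hd. apply (Hy y). split. split; auto. exact I. exact Hd.
Qed.

Lemma lim_eq (g h : R -> R) d : 0 < d -> continuity_pt g 0 -> continuity_pt h 0 ->
  (forall t, 0 < Rabs t < d -> g t = h t) -> g 0 = h 0.
Proof.
  intros Hd Hg Hh E. apply NNPP; intro N.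
  assert (He : 0 < Rabs (g 0 - h 0) / 2).
  { assert (g 0 - h 0 <> 0) by lra. apply Rabs_pos_lt in H. lra. }
  destruct (cont_eps g 0 Hg _ He) as [a1 [Ha1 H1]].
  destruct (cont_eps h 0 Hh _ He) as [a2 [Ha2 H2]].
  set (t := Rmin (Rmin a1 a2) d / 2).
  assert (Ht0 : 0 < Rmin (Rmin a1 a2) d) by (repeat apply Rmin_glb_lt; auto).
  assert (Hta : Rmin (Rmin a1 a2) d <= a1 /\ Rmin (Rmin a1 a2) d <= a2 /\ Rmin (Rmin a1 a2) d <= d).
  { split; [|split]. eapply Rle_trans; apply Rmin_l. eapply Rle_trans; [apply Rmin_l|apply Rmin_r]. apply Rmin_r. }
  assert (Rabs t = t) by (apply Rabs_right; unfold t; lra).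
  assert (Hne : 0 <> t) by (unfold t; lra).
  specialize (H1 t Hne). specialize (H2 t Hne). rewrite Rminus_0_r in H1, H2.
  rewrite H in H1, H2. specialize (H1 ltac:(unfold t; lra)). specialize (H2 ltac:(unfold t; lra)).
  rewrite E in H1 by (rewrite H; unfold t; lra).
  assert (Rabs (g 0 - h 0) <= Rabs (h t - g 0) + Rabs (h t - h 0)).
  { replace (g 0 - h 0) with (-(h t - g 0) + (h t - h 0)) by ring.
    eapply Rle_trans; [apply Rabs_triang|]. rewrite Rabs_Ropp. lra. }
  lra.
Qed.

Lemma coef_unique r : forall a h d, Rbar_lt 0 (CV_radius a) -> 0 < d -> continuity_pt h 0 ->
  (forall t, 0 < Rabs t < d -> PSeries a t = t ^ r * h t) ->
  (forall p, (p < r)%nat -> a p = 0) /\ a r = h 0.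
Proof.
  induction r; intros a h d Ha Hd Hh E.
  - split. intros; lia. rewrite <- PSeries_0. apply (lim_eq _ _ d); auto.
    apply PSeries_continuity. rewrite Rabs_R0. auto.
    intros t Ht. rewrite E by auto. ring.
  - assert (A0 : a 0%nat = 0).
    { rewrite <- PSeries_0. replace 0 with (0 ^ S r * h 0) at 2 by (simpl; ring).
      apply (lim_eq _ (fun t => t ^ S r * h t) d); auto.
      apply PSeries_continuity. rewrite Rabs_R0. auto.
      apply (continuity_pt_mult (fun t => t ^ S r) h). apply derivable_continuous_pt, derivable_pt_pow. auto. }
    destruct (IHr (PS_decr_1 a) h d) as [H1 H2]; auto.
    + rewrite CV_radius_decr_1; auto.
    + intros t Ht. assert (t <> 0). { intro Z; subst; rewrite Rabs_R0 in Ht; lra. }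
      apply Rmult_eq_reg_l with t; auto. rewrite <- PSeries_decr_1_aux by auto. rewrite E by auto. simpl; ring.
    + split; auto. intros p Hp. destruct p; auto. apply (H1 p). lia.
Qed.

Lemma CV_radius_decr_n a n : CV_radius (PS_decr_n a n) = CV_radius a.
Proof. induction n.
  - apply CV_radius_ext. intros; reflexivity.
  - rewrite <- IHn, <- (CV_radius_decr_1 (PS_decr_n a n)). apply CV_radius_ext. intros k. unfold PS_decr_n, PS_decr_1. f_equal. lia.
Qed.

Lemma min_wit (P : nat -> Prop) : (exists p, P p) -> exists p, P p /\ forall q, (q < p)%nat -> ~ P q.
Proof.
  intros [p Hp]. apply NNPP; intro N.
  assert (forall k, forall q, (q <= k)%nat -> ~ P q).
  { induction k; intros q Hq HP.
    - apply N. exists q. split; auto. intros; lia.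
    - destruct (Nat.eq_dec q (S k)).
      + subst. apply N. exists (S k). split; auto. intros q' Hq'. apply IHk. lia.
      + apply (IHk q); auto; lia. }
  exact (H p p (le_n _) Hp).
Qed.

Lemma common_rad m (Xs : nat -> nat -> R) :
  (forall i, (i < m)%nat -> Rbar_lt 0 (CV_radius (fun p => Xs p i))) ->
  exists rho, 0 < rho /\ forall i, (i < m)%nat -> Rbar_le rho (CV_radius (fun p => Xs p i)).
Proof.
  induction m; intros H.
  - exists 1. split. lra. intros; lia.
  - destruct IHm as [r1 [Hr1 H1]]. intros; apply H; lia.
    assert (exists r2, 0 < r2 /\ Rbar_le r2 (CV_radius (fun p => Xs p m))) as [r2 [Hr2 H2]].
    { specialize (H m ltac:(lia)). destruct (CV_radius (fun p => Xs p m)) as [x| |] eqn:Ex; simpl in H.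
      - exists x. split; auto. simpl. lra.
      - exists 1. split; simpl; auto. lra.
      - contradiction. }
    exists (Rmin r1 r2). split. apply Rmin_glb_lt; auto.
    intros i Hi. destruct (Nat.eq_dec i m).
    + subst. eapply Rbar_le_trans; [|exact H2]. simpl. apply Rmin_r.
    + eapply Rbar_le_trans; [|apply H1; lia]. simpl. apply Rmin_l.
Qed.

Theorem theorem3 (m n : nat) (alpha : nat -> nat -> nat -> R)
  (beta : nat -> nat -> R) (gamma : nat -> R) (X0 : nat -> R) :
  (1 <= m)%nat -> (1 <= n)%nat ->
  (forall k i j, (k < n)%nat -> (i < m)%nat -> (j < m)%nat ->
     alpha k i j = alpha k j i) ->
  (forall k, (k < n)%nat -> Fmap m alpha beta gamma X0 k = 0) ->
  (forall X1 : nat -> R,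
     (exists i, (i < m)%nat /\ X1 i <> 0) ->
     (forall k, (k < n)%nat -> Cmap m alpha beta X0 X1 k = 0) ->
     ~ (exists X2 : nat -> R,
          forall k, (k < n)%nat ->
            Cmap m alpha beta X0 X2 k = - Bmap m alpha X1 X1 k)) ->
  ~ (exists Xs : nat -> nat -> R,
       analytic_family m n alpha beta gamma X0 Xs /\ nonconstant m Xs).
Proof.
  intros Hm Hn Hsym HF0 Hno [Xs [[Hrad [H0 [delta [Hdel Hsol]]]] Hnc]].
  destruct (min_wit (fun p => (1 <= p)%nat /\ exists i, (i < m)%nat /\ Xs p i <> 0)) as [r [[Hr1 [i0 [Hi0 Hx]]] Hmin]].
  { destruct Hnc as [p [i [H1 [H2 H3]]]]. exists p. split; auto. exists i; auto. }
  destruct r as [|r']; [lia|].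
  destruct (common_rad m Xs Hrad) as [rho [Hrho Hrhoi]].
  set (a := fun j => PS_decr_n (PS_decr_1 (fun p => Xs p j)) r').
  set (Y := fun j t => PSeries (a j) t).
  assert (Fa : forall j, (j < m)%nat -> Rbar_le rho (CV_radius (a j))).
  { intros j Hj. unfold a. rewrite CV_radius_decr_n, CV_radius_decr_1. auto. }
  assert (Fx : forall t, Rabs t < rho -> forall j, (j < m)%nat ->
             eval_family Xs t j = X0 j + t ^ (S r') * Y j t).
  { intros t Ht j Hj. unfold eval_family. rewrite PSeries_decr_1.
    2:{ apply CV_radius_inside. eapply Rbar_lt_le_trans; [|apply Hrhoi; auto]. simpl; auto. }
    rewrite H0 by auto. rewrite PSeries_decr_n_aux with (n := r').
    - unfold Y, a. simpl. ring.
    - intros k Hk. unfold PS_decr_1. apply NNPP; intro N. apply (Hmin (S k)). lia.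
      split. lia. exists j; auto. }
  assert (K : forall k, (k < n)%nat -> Cmap m alpha beta X0 (Xs (S r')) k = 0 /\
     Cmap m alpha beta X0 (Xs (S (r' + S r'))) k = - Bmap m alpha (Xs (S r')) (Xs (S r')) k).
  { intros k Hk.
    set (L := Lin m alpha beta X0 k).
    set (c := fun p => sumR m (fun j => L j * a j p)).
    set (h := fun t => - Bmap m alpha (fun j => Y j t) (fun j => Y j t) k).
    destruct (coef_unique (S r') c h (Rmin rho delta)) as [C1 C2].
    - eapply Rbar_lt_le_trans; [|apply (rad_sum m L a rho); [lra|exact Fa]]. simpl; auto.
    - apply Rmin_glb_lt; auto.
    - assert (HY : forall j, (j < m)%nat -> continuity_pt (Y j) 0).
      { intros j Hj. apply PSeries_continuity. rewrite Rabs_R0.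
        eapply Rbar_lt_le_trans; [|apply Fa; auto]. simpl; auto. }
      unfold h. apply (continuity_pt_opp (fun t => Bmap m alpha (fun j => Y j t) (fun j => Y j t) k)).
      unfold Bmap. apply cont_sum; intros i Hi. apply cont_sum; intros j Hj.
      apply cont_mult. apply cont_mult. apply cont_const. apply HY; auto. apply HY; auto.
    - intros t [Ht1 Ht2].
      assert (Htr : Rabs t < rho) by (eapply Rlt_le_trans; [exact Ht2|apply Rmin_l]).
      assert (Htd : Rabs t < delta) by (eapply Rlt_le_trans; [exact Ht2|apply Rmin_r]).
      assert (Tn : t ^ S r' <> 0). { apply pow_nonzero. intro Z; subst; rewrite Rabs_R0 in Ht1; lra. }
      unfold c. rewrite (proj2 (ps_sum m L a t ltac:(intros j Hj; apply CV_radius_inside; eapply Rbar_lt_le_trans; [|apply Fa; auto]; simpl; auto))).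
      transitivity (Cmap m alpha beta X0 (fun j => Y j t) k). { rewrite Cmap_lin. reflexivity. }
      idtac.
      specialize (Hsol t Htd k Hk).
      rewrite (Fmap_ext m alpha beta gamma _ (fun i => X0 i + (fun i => t ^ S r' * Y i t) i) k) in Hsol by (intros; apply Fx; auto).
      rewrite Fmap_decomp, HF0, Cmap_scal, Bmap_scal in Hsol by auto.
      unfold h. apply Rmult_eq_reg_l with (t ^ S r'); auto.
      replace ((t ^ S r') ^ 2) with (t ^ S r' * t ^ S r') in Hsol by ring.
      lra.
    - split.
      + rewrite <- (C1 0%nat) by lia. unfold c. rewrite Cmap_lin. apply sumR_ext. intros j Hj.
        unfold a, PS_decr_n, PS_decr_1. rewrite Nat.add_0_r. reflexivity.
      + transitivity (c (S r')).
        * unfold c. rewrite Cmap_lin. apply sumR_ext. intros j Hj. reflexivity.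
        * rewrite C2. unfold h. f_equal. apply Bmap_ext. intros j Hj. unfold Y. rewrite PSeries_0.
          unfold a, PS_decr_n, PS_decr_1. rewrite Nat.add_0_r. reflexivity. }
  apply (Hno (Xs (S r'))).
  - exists i0; auto.
  - intros k Hk; apply (K k Hk).
  - exists (Xs (S (r' + S r'))). intros k Hk; apply (K k Hk).
Qed.
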